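(* There is a constant $C>0$ such that for every $d\ge2$ and $h\ge1$, if $G$ is the rooted tree of depth $h$ in which every non-leaf vertex has exactly $d$ children and all leaves are at depth $h$, with $n$ vertices in total, then for every rule $\mathcal{R}$ the greedy random walk on $G$ started at the root satisfies $\mathbb{E}[C_E(G)]\le C\,n\log_d n$.
   Context: A greedy random walk (GRW) on a connected locally finite graph $G=(V,E)$ with rule $\mathcal{R}$ started at $v_0$: $X_0=v_0$; with $H_t=\{\{X_{s-1},X_s\}:0<s\le t\}$ and $J_t(v)=\{e\in E: v\in e, e\notin H_t\}$, if $J_t(X_t)\ne\emptyset$ then $X_{t+1}=w$ for some $w$ with $\{X_t,w\}\in J_t(X_t)$, chosen according to an arbitrary (possibly randomized, history-dependent) rule $\mathcal{R}$; if $J_t(X_t)=\emptyset$ then $X_{t+1}$ is a uniformly random neighbor of $X_t$. $C_E(G)=\min\{t:H_t=E\}$ is the edge cover time. *)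

(* Defs.v *)
From Stdlib Require Import Reals List Arith Bool.
Import ListNotations.
Open Scope R_scope.

(* Vertices of the complete d-ary tree of depth h: addresses from the root,
   i.e. lists of child indices (each < d) of length <= h.  Root = []. *)
Definition V := list nat.

Definition veq (u v : V) : bool :=
  if list_eq_dec Nat.eq_dec u v then true else false.

Definition children (d h : nat) (u : V) : list V :=
  if Nat.ltb (length u) h then map (fun i => u ++ [i]) (seq 0 d) else [].

Definition parent_list (u : V) : list V :=
  match u with [] => [] | _ => [removelast u] end.

Definition nbrs (d h : nat) (u : V) : list V := parent_list u ++ children d h u.

Fixpoint level (d k : nat) : list V :=
  match k with
  | O => [[]]
  | S k' => flat_map (fun u => map (fun i => u ++ [i]) (seq 0 d)) (level d k')
  end.

Definition verts (d h : nat) : list V := flat_map (level d) (seq 0 (S h)).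

Definition nverts (d h : nat) : nat := length (verts d h).

Definition edges (d h : nat) : list (V * V) :=
  flat_map (fun u => map (fun c => (u, c)) (children d h u)) (verts d h).

(* A history is the walk so far [X_0; ...; X_t] (chronological). *)
Definition cur (p : list V) : V := last p [].

Definition steps (p : list V) : list (V * V) := combine (removelast p) (tl p).

(* {x,y} is in H_t *)
Definition used (p : list V) (x y : V) : bool :=
  existsb (fun ab => orb (veq (fst ab) x && veq (snd ab) y)
                     (veq (fst ab) y && veq (snd ab) x)) (steps p).

Definition covered (d h : nat) (p : list V) : bool :=
  forallb (fun e => used p (fst e) (snd e)) (edges d h).

(* endpoints w of the edges in J_t(X_t) *)
Definition unused_nbrs (d h : nat) (p : list V) : list V :=
  filter (fun w => negb (used p (cur p) w)) (nbrs d h (cur p)).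

(* A (randomized, history-dependent) rule: given the history p, rule p w is the
   probability of moving to w; it must be a probability distribution on the
   endpoints of the unused edges at the current vertex whenever J_t(X_t) is nonempty. *)
Definition valid_rule (d h : nat) (rule : list V -> V -> R) : Prop :=
  forall p, unused_nbrs d h p <> [] ->
    (forall w, 0 <= rule p w) /\
    (forall w, ~ In w (unused_nbrs d h p) -> rule p w = 0) /\
    fold_right Rplus 0 (map (rule p) (unused_nbrs d h p)) = 1.

Definition step (d h : nat) (rule : list V -> V -> R) (p : list V) (w : V) : R :=
  match unused_nbrs d h p with
  | [] => / INR (length (nbrs d h (cur p)))
  | _ => rule p w
  end.

(* law of the history (X_0,...,X_t), X_0 = root, as a list of (path, probability) *)
Fixpoint dist (d h : nat) (rule : list V -> V -> R) (t : nat) : list (list V * R) :=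
  match t with
  | O => [([[]], 1)]
  | S t' =>
      flat_map (fun pq =>
        map (fun w => (fst pq ++ [w], snd pq * step d h rule (fst pq) w))
            (nbrs d h (cur (fst pq))))
        (dist d h rule t')
  end.

(* P(C_E(G) > t) = P(H_t <> E) *)
Definition tail_prob (d h : nat) (rule : list V -> V -> R) (t : nat) : R :=
  fold_right Rplus 0
    (map (fun pq => if covered d h (fst pq) then 0 else snd pq) (dist d h rule t)).

(* sum_{t<N} P(C_E > t); E[C_E] is the supremum over N of this *)
Definition partial_expect (d h : nat) (rule : list V -> V -> R) (N : nat) : R :=
  fold_right Rplus 0 (map (tail_prob d h rule) (seq 0 N)).

(* Main.v *)
Require Import Defs.
From Stdlib Require Import Reals List Arith.
From Stdlib Require Import Lia Lra Bool.
Import ListNotations.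
Open Scope R_scope.

Lemma veq_true u v : veq u v = true <-> u = v.
Proof. unfold veq; destruct (list_eq_dec Nat.eq_dec u v); split; congruence. Qed.

Lemma veq_refl u : veq u u = true.
Proof. apply veq_true; reflexivity. Qed.

Lemma used_sym p x y : used p x y = used p y x.
Proof.
  unfold used. induction (steps p) as [|a l IH]; simpl; auto.
  rewrite IH. f_equal. apply orb_comm.
Qed.

Lemma combine_snoc {A B} (l1 : list A) (l2 : list B) a b :
  length l1 = length l2 -> combine (l1 ++ [a]) (l2 ++ [b]) = combine l1 l2 ++ [(a,b)].
Proof.
  revert l2; induction l1 as [|x l1 IH]; intros [|y l2] H; simpl in *; try lia; auto.
  rewrite IH; auto.
Qed.

Lemma steps_app p w : p <> [] -> steps (p ++ [w]) = steps p ++ [(cur p, w)].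
Proof.
  intros Hp. unfold steps. rewrite removelast_last.
  assert (Htl : tl (p ++ [w]) = tl p ++ [w]) by (destruct p; [congruence|reflexivity]).
  rewrite Htl. rewrite (@app_removelast_last V p [] Hp) at 1.
  apply combine_snoc.
  destruct (exists_last Hp) as [p0 [x Hx]]. rewrite Hx at 1. rewrite removelast_last.
  rewrite length_tl, Hx, length_app. simpl. lia.
Qed.

Lemma cur_app p w : cur (p ++ [w]) = w.
Proof. unfold cur; apply last_last. Qed.

Lemma used_app p w a b : p <> [] ->
  used (p ++ [w]) a b = (used p a b || ((veq (cur p) a && veq w b) || (veq (cur p) b && veq w a)))%bool.
Proof.
  intros Hp. unfold used. rewrite steps_app by auto. rewrite existsb_app. simpl.
  rewrite orb_false_r. reflexivity.
Qed.

Lemma used_mono p w a b : p <> [] -> used p a b = true -> used (p ++ [w]) a b = true.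
Proof. intros Hp H. rewrite used_app, H by auto. reflexivity. Qed.

Lemma used_app_same p w a b : p <> [] -> used p (cur p) w = true ->
  used (p ++ [w]) a b = used p a b.
Proof.
  intros Hp Hu. rewrite used_app by auto.
  destruct (used p a b) eqn:E; simpl; auto.
  destruct (veq (cur p) a) eqn:E1, (veq w b) eqn:E2, (veq w a) eqn:E3, (veq (cur p) b) eqn:E4;
    simpl; auto;
  repeat match goal with H : veq _ _ = true |- _ => apply veq_true in H; subst end;
  try (rewrite E in Hu; discriminate);
  try (rewrite used_sym, E in Hu; discriminate).
Qed.

Lemma covered_mono d h p w : p <> [] -> covered d h p = true -> covered d h (p ++ [w]) = true.
Proof.
  unfold covered; intros Hp H. rewrite forallb_forall in *. intros e He.
  apply used_mono; auto.
Qed.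

Lemma In_level d k v : In v (level d k) <-> length v = k /\ Forall (fun i => (i < d)%nat) v.
Proof.
  revert v; induction k as [|k IH]; intros v; simpl.
  - split.
    + intros [<-|[]]; split; auto.
    + intros [Hl _]; destruct v; simpl in *; auto; lia.
  - rewrite in_flat_map. split.
    + intros [u [Hu Hv]]. apply in_map_iff in Hv as [i [<- Hi]].
      apply in_seq in Hi. apply IH in Hu as [Hl Hf].
      rewrite length_app; simpl; split; [lia|]. apply Forall_app; split; auto. constructor; [lia|constructor].
    + intros [Hl Hf]. assert (Hne : v <> []) by (intros ->; simpl in Hl; lia).
      destruct (exists_last Hne) as [u [i ->]].
      apply Forall_app in Hf as [Hf1 Hf2]. inversion Hf2; subst.
      rewrite length_app in Hl; simpl in Hl.
      exists u; split. apply IH; split; auto; lia.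
      apply in_map_iff; exists i; split; auto. apply in_seq; lia.
Qed.

Lemma In_verts d h v : In v (verts d h) <-> (length v <= h)%nat /\ Forall (fun i => (i < d)%nat) v.
Proof.
  unfold verts. rewrite in_flat_map. split.
  - intros [k [Hk Hv]]. apply in_seq in Hk. apply In_level in Hv as [Hl Hf]. split; auto; lia.
  - intros [Hl Hf]. exists (length v); split. apply in_seq; lia. apply In_level; auto.
Qed.

Lemma In_children d h u c : In c (children d h u) <->
  (length u < h)%nat /\ exists i, (i < d)%nat /\ c = u ++ [i].
Proof.
  unfold children. destruct (Nat.ltb_spec (length u) h).
  - rewrite in_map_iff. split.
    + intros [i [<- Hi]]. apply in_seq in Hi. split; auto. exists i; split; auto; lia.
    + intros [_ [i [Hi ->]]]. exists i; split; auto. apply in_seq; lia.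
  - simpl; split; [tauto|]. intros [H' _]; lia.
Qed.

Lemma In_edges d h u c : In (u,c) (edges d h) <-> In u (verts d h) /\ In c (children d h u).
Proof.
  unfold edges. rewrite in_flat_map. split.
  - intros [x [Hx Hm]]. apply in_map_iff in Hm as [c' [Heq Hc]]. inversion Heq; subst; auto.
  - intros [Hu Hc]. exists u; split; auto. apply in_map_iff; exists c; auto.
Qed.

Lemma In_nbrs d h x w : In w (nbrs d h x) <-> (x <> [] /\ w = removelast x) \/ In w (children d h x).
Proof.
  unfold nbrs, parent_list. rewrite in_app_iff. destruct x; simpl.
  - split; [intros [[]|H]; auto|]. intros [[H _]|H]; auto; congruence.
  - split; intros [H|H]; auto.
    + destruct H as [<-|[]]. left; split; auto; congruence.
    + destruct H as [_ ->]; auto.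
Qed.

Lemma In_unused d h p w : In w (unused_nbrs d h p) <-> In w (nbrs d h (cur p)) /\ used p (cur p) w = false.
Proof.
  unfold unused_nbrs. rewrite filter_In. rewrite negb_true_iff. tauto.
Qed.

Lemma unused_nil d h p w : unused_nbrs d h p = [] -> In w (nbrs d h (cur p)) -> used p (cur p) w = true.
Proof.
  intros H Hw. destruct (used p (cur p) w) eqn:E; auto.
  assert (In w (unused_nbrs d h p)) by (apply In_unused; auto). rewrite H in H0; destruct H0.
Qed.

Lemma prefix_snoc (c a x : V) i : c ++ a = x ++ [i] ->
  (a = [] /\ c = x ++ [i]) \/ exists a', a = a' ++ [i] /\ c ++ a' = x.
Proof.
  intros H. destruct a as [|j a0] eqn:Ea.
  - left; rewrite app_nil_r in H; auto.
  - right. assert (Hne : a <> []) by (subst; congruence). rewrite <- Ea in H.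
    destruct (exists_last Hne) as [a' [j' Ha']]. rewrite Ha', app_assoc in H.
    apply app_inj_tail in H as [H1 H2]. subst j'. exists a'. rewrite <- Ea. split; auto.
Qed.


Definition SubUsed d h p (c : V) := forall u c', In (u,c') (edges d h) -> (exists a, c ++ a = u) -> used p u c' = true.

Definition Inv d h p :=
  In (cur p) (verts d h) /\
  (forall c a, c ++ a = cur p -> c <> [] -> used p (removelast c) c = true) /\
  (forall u c, In (u,c) (edges d h) -> used p u c = true -> (exists a, c ++ a = cur p) \/ SubUsed d h p c).

Lemma SubUsed_mono d h p w c : p <> [] -> SubUsed d h p c -> SubUsed d h (p ++ [w]) c.
Proof. intros Hp H u c' He Ha. apply used_mono; auto. Qed.

Lemma Inv_init d h : Inv d h [[]].
Proof.
  repeat split.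
  - unfold cur; simpl. apply In_verts; simpl; split; [lia|constructor].
  - intros c a Hc Hne. unfold cur in Hc; simpl in Hc. destruct c; simpl in *; congruence.
  - intros u c _ Hu. unfold used, steps in Hu; simpl in Hu; discriminate.
Qed.

Lemma length_snoc (x : V) i : length (x ++ [i]) = S (length x).
Proof. rewrite length_app; simpl; lia. Qed.

Lemma edge_len d h u c : In (u,c) (edges d h) -> length c = S (length u) /\ (length u < h)%nat.
Proof.
  intros H. apply In_edges in H as [_ Hc]. apply In_children in Hc as [Hl [i [_ ->]]].
  rewrite length_snoc; auto.
Qed.

Lemma Inv_step d h p w : p <> [] -> Inv d h p -> In w (nbrs d h (cur p)) ->
  (unused_nbrs d h p = [] \/ In w (unused_nbrs d h p)) -> Inv d h (p ++ [w]).
Proof.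
  intros Hp [Ha [Hb Hc]] Hw Hcase. set (x := cur p) in *.
  apply In_nbrs in Hw as [[Hx Hw]|Hw].
  -
    assert (Hnil : unused_nbrs d h p = []).
    { destruct Hcase as [H|H]; auto. exfalso. apply In_unused in H as [_ H].
      assert (Hu := Hb x [] (app_nil_r x) Hx). rewrite <- Hw in Hu. fold x in H.
      rewrite used_sym in Hu. congruence. }
    assert (Hall : forall c, In c (children d h x) -> used p x c = true).
    { intros c Hc'. apply unused_nil with (d:=d) (h:=h); auto. apply In_nbrs; auto. }
    destruct (exists_last Hx) as [w0 [l Hxw]].
    assert (Hww : w = w0) by (rewrite Hw, Hxw; apply removelast_last). subst w0.
    assert (Hxw_used : used p x w = true).
    { apply unused_nil with (d:=d) (h:=h); auto. apply In_nbrs; auto. }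
    assert (Ha0 := Ha). rewrite Hxw in Ha. apply In_verts in Ha as [Hal Haf]. rewrite length_snoc in Hal.
    apply Forall_app in Haf as [Haf _].
    repeat split; rewrite cur_app.
    + apply In_verts; split; auto; lia.
    + intros c a Hca Hne. apply used_mono; auto. apply (Hb c (a ++ [l])); auto.
      fold x. rewrite Hxw, <- Hca, app_assoc; auto.
    + intros u c Hue Hu. rewrite used_app_same in Hu by auto.
      destruct (Hc u c Hue Hu) as [[a Hpre]|Hs]; [|right; apply SubUsed_mono; auto].
      fold x in Hpre. rewrite Hxw in Hpre. apply prefix_snoc in Hpre as [[_ Hcx]|[a' [_ Ha']]].
      * right. rewrite <- Hxw in Hcx. subst c. apply SubUsed_mono; auto.
        intros u' c' He' [a2 Ha2]. destruct a2 as [|b bs].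
        -- rewrite app_nil_r in Ha2; subst u'. apply Hall. apply In_edges in He'; tauto.
        -- assert (He2 : In (x, x ++ [b]) (edges d h)).
           { assert (Hv' := He'). apply In_edges in Hv' as [Hv' Hc'].
             apply In_children in Hc' as [Hl' _]. apply In_verts in Hv' as [_ Hf'].
             rewrite <- Ha2 in Hf', Hl'. apply Forall_app in Hf' as [_ Hf'].
             inversion Hf'; subst.
             apply In_edges; split; auto.
             apply In_children; split; [rewrite length_app in Hl'; simpl in Hl'; lia|].
               exists b; split; auto. }
           assert (Hub : used p x (x ++ [b]) = true).
           { apply Hall. apply In_edges in He2; tauto. }
           destruct (Hc _ _ He2 Hub) as [[a3 Ha3]|Hs].
           ++ exfalso. fold x in Ha3. assert (Hlen := f_equal (@length nat) Ha3).
              rewrite !length_app in Hlen; simpl in Hlen; lia.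
           ++ apply Hs; auto. exists bs. rewrite <- Ha2, <- app_assoc; reflexivity.
      * left; exists a'; auto.
  -
    apply In_children in Hw as [Hxl [i [Hi Hwi]]]. subst w.
    assert (Hnew : used (p ++ [x ++ [i]]) x (x ++ [i]) = true).
    { rewrite used_app by auto. fold x. rewrite !veq_refl. simpl. apply orb_true_r. }
    apply In_verts in Ha as [Hal Haf].
    repeat split; rewrite cur_app.
    + apply In_verts; rewrite length_snoc; split; [lia|]. apply Forall_app; split; auto.
    + intros c a Hca Hne. apply prefix_snoc in Hca as [[_ ->]|[a' [_ Ha']]].
      * rewrite removelast_last; auto.
      * apply used_mono; auto. apply (Hb c a'); auto.
    + intros u c Hue Hu. rewrite used_app in Hu by auto. fold x in Hu.
      destruct (used p u c) eqn:Eo.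
      * destruct (Hc u c Hue Eo) as [[a Ha]|Hs].
        -- left. exists (a ++ [i]). rewrite app_assoc, Ha; auto.
        -- right; apply SubUsed_mono; auto.
      * simpl in Hu. apply orb_true_iff in Hu as [Hu|Hu]; apply andb_true_iff in Hu as [H1 H2];
          apply veq_true in H1; apply veq_true in H2; subst.
        -- left; exists []; apply app_nil_r.
        -- exfalso. apply edge_len in Hue as [Hl _]. rewrite length_snoc in Hl. lia.
Qed.

Lemma root_covered d h p : Inv d h p -> cur p = [] ->
  (forall w, In w (nbrs d h (cur p)) -> used p (cur p) w = true) -> covered d h p = true.
Proof.
  intros [Ha [Hb Hc]] Hx Hall. unfold covered. apply forallb_forall. intros [u c] He. simpl.
  destruct u as [|a u'].
  - rewrite <- Hx. apply Hall. rewrite Hx. apply In_nbrs. right. apply In_edges in He; tauto.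
  - assert (He2 : In ([], [a]) (edges d h)).
    { assert (Hv := He). apply In_edges in Hv as [Hv Hch]. apply In_children in Hch as [Hl _].
      apply In_verts in Hv as [_ Hf]. inversion Hf; subst.
      apply In_edges; split. apply In_verts; simpl; split; [lia|constructor].
      apply In_children; simpl; split; [lia|]. exists a; split; auto. }
    assert (Hu : used p [] [a] = true).
    { rewrite <- Hx. apply Hall. rewrite Hx. apply In_nbrs. right. apply In_edges in He2; tauto. }
    destruct (Hc _ _ He2 Hu) as [[a3 Ha3]|Hs].
    + rewrite Hx in Ha3. discriminate.
    + apply Hs; auto. exists u'; reflexivity.
Qed.


Fixpoint gg (d j : nat) : nat := match j with O => 1%nat | S j' => (1 + d * (gg d j' + 1))%nat end.
Fixpoint PPn (d h m : nat) : R := match m with O => 0 | S m' => PPn d h m' + INR (gg d (h - S m')) end.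
Definition EP d h p : R := fold_right Rplus 0 (map (fun e => if used p (fst e) (snd e) then 0 else INR (1 + gg d (h - length (snd e)))) (edges d h)).
Definition Phi d h p : R := EP d h p + PPn d h (length (cur p)).

Definition sumR {A} (f : A -> R) (l : list A) : R := fold_right Rplus 0 (map f l).

Lemma sum_le {A} (l : list A) f g : (forall x, In x l -> f x <= g x) -> sumR f l <= sumR g l.
Proof. unfold sumR; induction l; simpl; intros H; [lra|]. apply Rplus_le_compat; auto. Qed.

Lemma sum_nonneg {A} (l : list A) f : (forall x, In x l -> 0 <= f x) -> 0 <= sumR f l.
Proof. unfold sumR; induction l; simpl; intros H; [lra|]. apply Rplus_le_le_0_compat; auto. Qed.

Lemma sum_plus {A} (l : list A) f g : sumR (fun x => f x + g x) l = sumR f l + sumR g l.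
Proof. unfold sumR; induction l; simpl; [lra|]. rewrite IHl; lra. Qed.

Lemma sum_scal {A} (l : list A) c f : sumR (fun x => c * f x) l = c * sumR f l.
Proof. unfold sumR; induction l; simpl; [lra|]. rewrite IHl; lra. Qed.

Lemma sum_const {A} (l : list A) c : sumR (fun _ => c) l = INR (length l) * c.
Proof. unfold sumR; induction l; simpl length; simpl fold_right; [simpl; lra|]. rewrite IHl, S_INR; lra. Qed.

Lemma sum_ext {A} (l : list A) f g : (forall x, In x l -> f x = g x) -> sumR f l = sumR g l.
Proof. unfold sumR; induction l; simpl; intros H; auto. rewrite H, IHl; auto. Qed.

Lemma sum_map {A B} (l : list A) (g : A -> B) f : sumR f (map g l) = sumR (fun x => f (g x)) l.
Proof. unfold sumR; rewrite map_map; auto. Qed.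

Lemma sum_app {A} (l1 l2 : list A) f : sumR f (l1 ++ l2) = sumR f l1 + sumR f l2.
Proof. unfold sumR; induction l1; simpl; [lra|]. rewrite IHl1; lra. Qed.

Lemma sum_cons {A} (a : A) l f : sumR f (a :: l) = f a + sumR f l.
Proof. reflexivity. Qed.

Lemma sum_flat_map {A B} (l : list A) (g : A -> list B) f :
  sumR f (flat_map g l) = sumR (fun a => sumR f (g a)) l.
Proof. induction l; simpl; [reflexivity|]. rewrite sum_app, IHl. reflexivity. Qed.

Lemma sum_dec_one {A} (l : list A) e f f' K : In e l -> (forall x, In x l -> f' x <= f x) ->
  f' e = f e - K -> sumR f' l <= sumR f l - K.
Proof.
  intros He Hle Hk. induction l as [|a l IH]; [destruct He|]. unfold sumR in *; simpl.
  destruct He as [->|He].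
  - assert (fold_right Rplus 0 (map f' l) <= fold_right Rplus 0 (map f l)).
    { apply (sum_le l f' f). intros; apply Hle; simpl; auto. }
    lra.
  - assert (H1 := Hle a (or_introl eq_refl)).
    assert (H2 := IH He (fun x Hx => Hle x (or_intror Hx))). lra.
Qed.

Lemma sum_filter {A} (l : list A) P f : (forall x, In x l -> P x = false -> f x = 0) ->
  sumR f (filter P l) = sumR f l.
Proof.
  unfold sumR; induction l as [|a l IH]; simpl; intros H; auto.
  destruct (P a) eqn:E; simpl; rewrite IH; auto. rewrite (H a); auto. lra.
Qed.

Lemma PPn_nonneg d h m : 0 <= PPn d h m.
Proof. induction m; simpl; [lra|]. assert (0 <= INR (gg d (h - S m))) by apply pos_INR. lra. Qed.

Lemma EP_nonneg d h p : 0 <= EP d h p.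
Proof.
  apply (sum_nonneg (edges d h)). intros e _. destruct (used p (fst e) (snd e)); [lra|apply pos_INR].
Qed.

Lemma Phi_nonneg d h p : 0 <= Phi d h p.
Proof. unfold Phi. assert (H1 := EP_nonneg d h p). assert (H2 := PPn_nonneg d h (length (cur p))). lra. Qed.

Lemma Phi_down d h p w : p <> [] -> Inv d h p -> In w (children d h (cur p)) ->
  used p (cur p) w = false -> Phi d h (p ++ [w]) <= Phi d h p - 1.
Proof.
  intros Hp [Ha _] Hw Hu. unfold Phi. rewrite cur_app.
  assert (Hw' := Hw). apply In_children in Hw' as [_ [i [_ Hwi]]].
  assert (Hlw : length w = S (length (cur p))) by (rewrite Hwi; apply length_snoc).
  assert (HE : EP d h (p ++ [w]) <= EP d h p - INR (1 + gg d (h - length w))).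
  { apply (sum_dec_one (edges d h) (cur p, w)).
    - apply In_edges; auto.
    - intros [u c] _. cbn [fst snd]. destruct (used p u c) eqn:E.
      + rewrite used_mono by auto. lra.
      + destruct (used (p ++ [w]) u c); [apply pos_INR|lra].
    - cbn [fst snd]. rewrite Hu. rewrite used_app by auto. rewrite !veq_refl. simpl.
      rewrite orb_true_r. lra. }
  rewrite Hlw in *. simpl PPn. rewrite plus_INR in HE. simpl (INR 1) in HE. lra.
Qed.

Lemma EP_same d h p w : p <> [] -> used p (cur p) w = true -> EP d h (p ++ [w]) = EP d h p.
Proof.
  intros Hp Hu. apply (sum_ext (edges d h)). intros e _. rewrite used_app_same; auto.
Qed.

Lemma nbrs_nonroot d h x : x <> [] -> nbrs d h x = removelast x :: children d h x.
Proof. intros Hx. unfold nbrs, parent_list. destruct x; [congruence|reflexivity]. Qed.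

Lemma step_nonneg d h rule p w : valid_rule d h rule -> 0 <= step d h rule p w.
Proof.
  intros Hv. unfold step. destruct (unused_nbrs d h p) eqn:E.
  - destruct (length (nbrs d h (cur p))) as [|n]; [simpl; rewrite Rinv_0; lra|].
    apply Rlt_le, Rinv_0_lt_compat. apply lt_0_INR; lia.
  - apply Hv. rewrite E; congruence.
Qed.

Lemma drift d h rule p : valid_rule d h rule -> p <> [] -> Inv d h p -> covered d h p = false ->
  sumR (fun w => step d h rule p w * Phi d h (p ++ [w])) (nbrs d h (cur p)) <= Phi d h p - 1.
Proof.
  intros Hv Hp HI Hcov. set (x := cur p).
  destruct (unused_nbrs d h p) as [|u0 us] eqn:Eun.
  -
    assert (Hx : x <> []).
    { intros Hx0. rewrite root_covered in Hcov; auto; [discriminate|].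
      intros w Hw. apply unused_nil with d h; auto. }
    unfold step. rewrite Eun.
    rewrite (sum_ext _ _ (fun w : V => / INR (length (nbrs d h (cur p))) * (EP d h p + PPn d h (length w)))).
    2:{ intros w Hw. unfold Phi. rewrite cur_app, EP_same; auto. apply unused_nil with d h; auto. }
    fold x. assert (Hn := nbrs_nonroot d h x Hx).
    destruct (exists_last Hx) as [x0 [l Hxl]].
    destruct HI as [Ha _]. fold x in Ha. rewrite Hxl in Ha. apply In_verts in Ha as [Hlen _].
    rewrite length_snoc in Hlen.
    assert (HE := EP_nonneg d h p). unfold Phi. fold x.
    set (E := EP d h p) in *. set (m := length x0) in *.
    assert (Hxlen : length x = S m) by (rewrite Hxl; apply length_snoc).
    assert (Hrl : removelast x = x0) by (rewrite Hxl; apply removelast_last).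
    rewrite Hxlen.
    set (D := length (nbrs d h x)).
    rewrite Hn, sum_cons, Hrl. fold m.
    unfold children at 1. rewrite Hxlen.
    destruct (Nat.ltb_spec (S m) h) as [Hlt|Hge].
    + assert (HD : D = S d) by (unfold D; rewrite Hn; cbn [length]; unfold children; rewrite Hxlen; apply Nat.ltb_lt in Hlt as Hlt'; rewrite Hlt'; rewrite length_map, length_seq; auto).
      rewrite HD. rewrite sum_map.
      rewrite (sum_ext _ _ (fun _ => / INR (S d) * (E + PPn d h (S (S m))))).
      2:{ intros i _. rewrite length_snoc, Hxlen. reflexivity. }
      rewrite sum_const, length_seq. simpl PPn.
      assert (Hg : gg d (h - S m) = (1 + d * (gg d (h - S (S m)) + 1))%nat).
      { replace (h - S m)%nat with (S (h - S (S m))) by lia. reflexivity. }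
      rewrite Hg, plus_INR, mult_INR, plus_INR. simpl (INR 1).
      rewrite S_INR. assert (0 <= INR d) by apply pos_INR.
      set (G := INR (gg d (h - S (S m)))). set (P0 := PPn d h m). set (dd := INR d).
      assert (Heq : / (dd + 1) * (E + P0) + dd * (/ (dd + 1) * (E + (P0 + (1 + dd * (G + 1)) + G)))
                    = E + (P0 + (1 + dd * (G + 1))) - 1).
      { field. unfold dd; intro; lra. }
      lra.
    + assert (HD : D = 1%nat) by (unfold D; rewrite Hn; cbn [length]; unfold children; rewrite Hxlen; apply Nat.ltb_ge in Hge as Hge'; rewrite Hge'; reflexivity).
      rewrite HD. unfold sumR; simpl fold_right. simpl PPn.
      replace (h - S m)%nat with 0%nat by lia. simpl. lra.
  -
    unfold step. rewrite Eun.
    assert (Hun : unused_nbrs d h p <> []) by (rewrite Eun; congruence).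
    destruct (Hv p Hun) as [Hnn [Hz Hs]].
    apply Rle_trans with (sumR (fun w => rule p w * (Phi d h p - 1)) (nbrs d h x)).
    + apply sum_le. intros w Hw.
      destruct (in_dec (list_eq_dec Nat.eq_dec) w (unused_nbrs d h p)) as [Hin|Hnin].
      * apply Rmult_le_compat_l; auto. apply In_unused in Hin as [Hin Hfalse].
        apply In_nbrs in Hin as [[Hx Hwp]|Hch].
        -- exfalso. destruct HI as [_ [Hb _]].
           assert (Hu := Hb (cur p) [] (app_nil_r _) Hx). rewrite <- Hwp, used_sym in Hu. congruence.
        -- apply Phi_down; auto.
      * rewrite Hz by auto. lra.
    + rewrite (sum_ext _ _ (fun w => (Phi d h p - 1) * rule p w)) by (intros; lra).
      rewrite sum_scal.
      assert (H1 : sumR (rule p) (nbrs d h x) = 1).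
      { rewrite <- Hs. unfold unused_nbrs. symmetry. apply sum_filter.
        intros w Hw Hf. apply Hz. intros Hin. apply filter_In in Hin as [_ Ht]. congruence. }
      unfold sumR in H1. unfold sumR. rewrite H1. lra.
Qed.


Lemma dist_inv d h rule : valid_rule d h rule -> forall t pq, In pq (Defs.dist d h rule t) ->
  fst pq <> [] /\ 0 <= snd pq /\ (snd pq = 0 \/ Inv d h (fst pq)).
Proof.
  intros Hv t. induction t as [|t IH]; intros pq Hpq; simpl in Hpq.
  - destruct Hpq as [<-|[]]. simpl. split; [congruence|]. split; [lra|]. right; apply Inv_init.
  - apply in_flat_map in Hpq as [[p q] [Hin Hm]]. apply in_map_iff in Hm as [w [<- Hw]].
    cbn [fst snd] in *. destruct (IH _ Hin) as [Hp [Hq HI]]. cbn [fst snd] in *.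
    assert (Hs := step_nonneg d h rule p w Hv).
    split; [destruct p; simpl; congruence|]. split; [apply Rmult_le_pos; auto|].
    destruct HI as [->|HI]; [left; lra|].
    destruct (Req_dec (step d h rule p w) 0) as [Hz|Hnz]; [left; rewrite Hz; lra|].
    right. apply Inv_step; auto.
    destruct (unused_nbrs d h p) eqn:E; [left; auto|right].
    destruct (in_dec (list_eq_dec Nat.eq_dec) w (unused_nbrs d h p)) as [Hi|Hni]; [rewrite E in Hi; exact Hi|].
    exfalso. apply Hnz. unfold step. rewrite E. apply Hv; [rewrite E; congruence|auto].
Qed.

Lemma dist_S d h rule t : Defs.dist d h rule (S t) =
  flat_map (fun pq => map (fun w => (fst pq ++ [w], snd pq * step d h rule (fst pq) w)) (nbrs d h (cur (fst pq)))) (Defs.dist d h rule t).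
Proof. reflexivity. Qed.

Definition A d h rule t := sumR (fun pq => snd pq * (if covered d h (fst pq) then 0 else Phi d h (fst pq))) (Defs.dist d h rule t).

Lemma A_nonneg d h rule t : valid_rule d h rule -> 0 <= A d h rule t.
Proof.
  intros Hv. apply sum_nonneg. intros pq Hpq. destruct (dist_inv d h rule Hv t pq Hpq) as [_ [Hq _]].
  apply Rmult_le_pos; auto. destruct covered; [lra|apply Phi_nonneg].
Qed.

Lemma A_step d h rule t : valid_rule d h rule -> A d h rule (S t) + tail_prob d h rule t <= A d h rule t.
Proof.
  intros Hv. unfold A, tail_prob. rewrite dist_S, sum_flat_map.
  fold (sumR (fun pq : list V * R => if covered d h (fst pq) then 0 else snd pq) (Defs.dist d h rule t)).
  rewrite <- sum_plus. apply sum_le. intros [p q] Hpq.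
  destruct (dist_inv d h rule Hv t _ Hpq) as [Hp [Hq HI]]. cbn [fst snd] in *.
  rewrite sum_map. cbn [fst snd].
  destruct (covered d h p) eqn:Ec.
  - rewrite (sum_ext _ _ (fun _ => 0)).
    2:{ intros w _. rewrite covered_mono by auto. lra. }
    rewrite sum_const. lra.
  - destruct HI as [->|HI].
    + rewrite (sum_ext _ _ (fun _ => 0)).
      2:{ intros w _. lra. }
      rewrite sum_const. lra.
    + apply Rle_trans with (sumR (fun w => q * (step d h rule p w * Phi d h (p ++ [w]))) (nbrs d h (cur p)) + q).
      * apply Rplus_le_compat_r. apply sum_le. intros w _.
        assert (Hs := step_nonneg d h rule p w Hv). assert (HP := Phi_nonneg d h (p ++ [w])).
        destruct (covered d h (p ++ [w])).
        -- rewrite Rmult_0_r. apply Rmult_le_pos; auto. apply Rmult_le_pos; auto.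
        -- lra.
      * rewrite sum_scal. assert (Hd := drift d h rule p Hv Hp HI Ec).
        apply Rmult_le_compat_l with (r := q) in Hd; auto. lra.
Qed.

Lemma fold_shift (l : list R) a : fold_right Rplus (a + 0) l = fold_right Rplus 0 l + a.
Proof. induction l; simpl; [lra|]. rewrite IHl; lra. Qed.

Lemma partial_bound d h rule N : valid_rule d h rule ->
  partial_expect d h rule N <= A d h rule 0 - A d h rule N.
Proof.
  intros Hv. induction N as [|N IH].
  - unfold partial_expect; simpl. lra.
  - unfold partial_expect in *. rewrite seq_S, map_app, fold_right_app. simpl.
    rewrite fold_shift. assert (Hs := A_step d h rule N Hv). lra.
Qed.


Definition nsumN {A} (f : A -> nat) (l : list A) : nat := fold_right plus 0%nat (map f l).

Lemma INR_sum {A} (l : list A) f : sumR (fun x => INR (f x)) l = INR (nsumN f l).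
Proof. unfold sumR, nsumN; induction l; simpl; auto. rewrite IHl, plus_INR; auto. Qed.

Lemma nsumN_le {A} (l : list A) f g : (forall x, In x l -> (f x <= g x)%nat) -> (nsumN f l <= nsumN g l)%nat.
Proof. unfold nsumN; induction l; simpl; intros H; auto. specialize (IHl (fun x Hx => H x (or_intror Hx))). specialize (H a (or_introl eq_refl)). lia. Qed.

Lemma nsumN_ext {A} (l : list A) f g : (forall x, In x l -> f x = g x) -> nsumN f l = nsumN g l.
Proof. unfold nsumN; induction l; simpl; intros H; auto. Qed.

Lemma nsumN_const {A} (l : list A) c : nsumN (fun _ => c) l = (length l * c)%nat.
Proof. unfold nsumN; induction l; simpl; auto; try (rewrite IHl; lia). Qed.

Lemma nsumN_app {A} (l1 l2 : list A) f : nsumN f (l1 ++ l2) = (nsumN f l1 + nsumN f l2)%nat.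
Proof. unfold nsumN; induction l1; simpl; auto; try (rewrite IHl1; lia). Qed.

Lemma nsumN_flat_map {A B} (l : list A) (g : A -> list B) f :
  nsumN f (flat_map g l) = nsumN (fun a => nsumN f (g a)) l.
Proof. induction l; simpl; auto. rewrite nsumN_app, IHl. reflexivity. Qed.

Lemma nsumN_map {A B} (l : list A) (g : A -> B) f : nsumN f (map g l) = nsumN (fun x => f (g x)) l.
Proof. unfold nsumN; rewrite map_map; auto. Qed.

Lemma nsumN_scal {A} (l : list A) c f : nsumN (fun x => c * f x)%nat l = (c * nsumN f l)%nat.
Proof. unfold nsumN; induction l; simpl; auto; try (rewrite IHl; lia). Qed.

Definition nsum d j := nsumN (Nat.pow d) (seq 0 (S j)).

Lemma nsum_S d j : nsum d (S j) = (1 + d * nsum d j)%nat.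
Proof.
  unfold nsum. change (seq 0 (S (S j))) with (0 :: seq 1 (S j))%nat. rewrite <- (seq_shift (S j) 0). unfold nsumN. cbn [map fold_right].
  change (fold_right Init.Nat.add 0%nat (map (Nat.pow d) (map S (seq 0 (S j))))) with (nsumN (Nat.pow d) (map S (seq 0 (S j)))).
  rewrite nsumN_map. simpl (d ^ 0)%nat.
  rewrite (nsumN_ext _ _ (fun x => d * d ^ x)%nat) by (intros; reflexivity).
  rewrite nsumN_scal. reflexivity.
Qed.

Lemma gg_nsum d j : (gg d j + 1 = 2 * nsum d j)%nat.
Proof.
  induction j; [reflexivity|]. rewrite nsum_S. simpl gg. nia.
Qed.

Lemma pow_nsum d j k : (d ^ k * nsum d j <= nsum d (j + k))%nat.
Proof.
  revert j; induction k; intros j; [rewrite Nat.pow_0_r, Nat.add_0_r; lia|]. rewrite Nat.pow_succ_r'.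
  replace (j + S k)%nat with (S j + k)%nat by lia.
  specialize (IHk (S j)). rewrite nsum_S in IHk. nia.
Qed.

Lemma nsum_ge d j : (d ^ j <= nsum d j)%nat.
Proof. induction j; [unfold nsum, nsumN; simpl; lia|]. rewrite nsum_S, Nat.pow_succ_r'. nia. Qed.

Lemma length_flat_map_const {A B} (g : A -> list B) l c : (forall x, length (g x) = c) ->
  length (flat_map g l) = (c * length l)%nat.
Proof. intros H; induction l; simpl; [lia|]. rewrite length_app, H, IHl. lia. Qed.

Lemma length_level d k : length (level d k) = (d ^ k)%nat.
Proof.
  induction k; [reflexivity|]. cbn [level]. rewrite (length_flat_map_const _ _ d).
  - rewrite Nat.pow_succ_r', <- IHk. reflexivity.
  - intros x. rewrite length_map, length_seq. reflexivity.
Qed.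

Lemma nverts_eq d h : nverts d h = nsum d h.
Proof.
  unfold nverts, verts, nsum. generalize (seq 0 (S h)). intros l. induction l; simpl; auto.
  rewrite length_app, length_level, IHl. reflexivity.
Qed.

Lemma EP0_nat d h : (nsumN (fun e : V * V => 1 + gg d (h - length (snd e))) (edges d h) <= 2 * S h * nverts d h)%nat.
Proof.
  unfold edges. rewrite nsumN_flat_map.
  apply Nat.le_trans with (nsumN (fun u : V => gg d (h - length u)) (verts d h)).
  - apply nsumN_le. intros u _. rewrite nsumN_map. cbn [snd].
    unfold children. destruct (Nat.ltb_spec (length u) h).
    + rewrite nsumN_map. rewrite (nsumN_ext _ _ (fun _ => 1 + gg d (h - S (length u))))%nat
        by (intros; rewrite length_snoc; reflexivity).
      rewrite nsumN_const, length_seq.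
      replace (h - length u)%nat with (S (h - S (length u))) by lia. simpl gg. lia.
    + unfold nsumN; simpl; lia.
  - unfold verts. rewrite nsumN_flat_map.
    rewrite (nsumN_ext _ _ (fun k => d ^ k * gg d (h - k)))%nat.
    2:{ intros k _. rewrite (nsumN_ext _ _ (fun _ => gg d (h - k))).
        - rewrite nsumN_const, length_level; auto.
        - intros u Hu. apply In_level in Hu as [-> _]; auto. }
    apply Nat.le_trans with (nsumN (fun _ => 2 * nverts d h) (seq 0 (S h)))%nat.
    + apply nsumN_le. intros k Hk. apply in_seq in Hk. rewrite nverts_eq.
      assert (H1 := gg_nsum d (h - k)). assert (H2 := pow_nsum d (h - k) k).
      replace (h - k + k)%nat with h in H2 by lia. nia.
    + rewrite nsumN_const, length_seq. lia.
Qed.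

Lemma Phi0_bound d h : Phi d h [[]] <= INR (2 * S h * nverts d h).
Proof.
  unfold Phi, cur; simpl last. simpl PPn. rewrite Rplus_0_r.
  unfold EP. fold (sumR (fun e : V * V => if used [[]] (fst e) (snd e) then 0 else INR (1 + gg d (h - length (snd e)))) (edges d h)).
  rewrite (sum_ext _ _ (fun e : V * V => INR (1 + gg d (h - length (snd e))))).
  2:{ intros e _. reflexivity. }
  rewrite INR_sum. apply le_INR. apply EP0_nat.
Qed.

Theorem mainTheorem10 :
  exists C : R, 0 < C /\
    forall d h : nat, (2 <= d)%nat -> (1 <= h)%nat ->
    forall rule : list V -> V -> R, valid_rule d h rule ->
    forall N : nat,
      partial_expect d h rule N <=
        C * INR (nverts d h) * (ln (INR (nverts d h)) / ln (INR d)).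
Proof.
  exists 4. split; [lra|]. intros d h Hd Hh rule Hv N.
  assert (H1 := partial_bound d h rule N Hv).
  assert (H2 := A_nonneg d h rule N Hv).
  assert (H3 : A d h rule 0 <= Phi d h [[]]).
  { unfold A, sumR; simpl. destruct (covered d h [[]]); assert (H := Phi_nonneg d h [[]]); lra. }
  assert (H4 := Phi0_bound d h).
  set (n := nverts d h) in *.
  assert (Hdn : (d ^ h <= n)%nat) by (unfold n; rewrite nverts_eq; apply nsum_ge).
  assert (Hdpos : 1 < INR d) by (apply lt_1_INR; lia).
  assert (Hlnd : 0 < ln (INR d)) by (rewrite <- ln_1; apply ln_increasing; lra).
  assert (Hdh : 0 < INR d ^ h) by (apply pow_lt; lra).
  assert (Hn : INR d ^ h <= INR n) by (rewrite <- pow_INR; apply le_INR; auto).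
  assert (Hln : INR h * ln (INR d) <= ln (INR n)).
  { rewrite <- ln_pow by lra. destruct (Rle_lt_or_eq_dec _ _ Hn) as [Hl|He].
    - apply Rlt_le, ln_increasing; auto.
    - rewrite He; lra. }
  assert (Hq : INR h <= ln (INR n) / ln (INR d)).
  { apply Rmult_le_reg_r with (ln (INR d)); auto. unfold Rdiv. rewrite Rmult_assoc, Rinv_l by lra. lra. }
  assert (Hh1 : 1 <= INR h) by (apply (le_INR 1); auto).
  assert (Hnpos : 0 <= INR n) by apply pos_INR.
  rewrite !mult_INR, !S_INR in H4. simpl (INR 0) in H4. rewrite Rplus_0_l in H4.
  assert (INR n * INR h <= INR n * (ln (INR n) / ln (INR d))) by (apply Rmult_le_compat_l; auto).
  assert (HH : (1 + 1) * (INR h + 1) * INR n <= 4 * (INR n * INR h)) by nra.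
  rewrite Rmult_assoc. lra.
Qed.
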